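(* Let $X_1,X_2\subset\mathbb{R}$ be endowed with the Borel $\sigma$-algebra $\mathcal{B}$, and let $(X_1,\mathcal{B},\mu_1,f_1)$ and $(X_2,\mathcal{B},\mu_2,f_2)$ be measure-preserving dynamical systems that are isomorphic via a continuous map $\phi:X_1\to X_2$ (so $\phi\circ f_1=f_2\circ\phi$). Suppose $f_1$ is topologically transitive and that, for all $x\in X_1$, the points $x$ (under $f_1$) and $\phi(x)$ (under $f_2$) define the same order patterns. Then $\phi$ is order-preserving, i.e. $x<x'$ in $X_1$ implies $\phi(x)<\phi(x')$.
   Context: For a map $T:X\to X$ on a totally ordered set and $L\geq 2$, a point $x$ defines the order pattern $\pi=[\pi_0,\dots,\pi_{L-1}]$ (a permutation of $\{0,\dots,L-1\}$) if $T^{\pi_0}(x)<T^{\pi_1}(x)<\dots<T^{\pi_{L-1}}(x)$. ''$x$ and $\phi(x)$ define the same order patterns'' means that for every $L\geq2$ and every permutation $\pi$ of $\{0,\dots,L-1\}$, $x$ defines $\pi$ under $f_1$ if and only if $\phi(x)$ defines $\pi$ under $f_2$. *)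

(* Defs.v *)
(* The canonical sigma-algebra on R (lebesgue_stieltjes_measure.v) is the one
   generated by half-open intervals, i.e. the Borel sigma-algebra. *)
From HB Require Import structures.
From mathcomp Require Import all_boot all_order all_algebra all_fingroup.
From mathcomp Require Import all_classical all_reals all_analysis.
Set Implicit Arguments. Unset Strict Implicit. Unset Printing Implicit Defensive.
Import Order.TTheory GRing.Theory Num.Theory.
Import numFieldNormedType.Exports.
Local Open Scope classical_set_scope.
Local Open Scope ring_scope.

Section defs.
Variable R : realType.

Definition defines_pattern (T : R -> R) (x : R) (L : nat) (pi : 'S_L) : Prop :=
  sorted <%R [seq iter (pi i) T x | i <- enum 'I_L].

Definition same_order_patterns (T1 T2 : R -> R) (x y : R) : Prop :=
  forall (L : nat), (2 <= L)%N -> forall pi : 'S_L,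
    defines_pattern T1 x pi <-> defines_pattern T2 y pi.

Definition rel_open (X U : set R) : Prop :=
  exists O : set R, open O /\ U = X `&` O.

Definition top_transitive (X : set R) (f : R -> R) : Prop :=
  forall U V : set R, rel_open X U -> rel_open X V ->
    U !=set0 -> V !=set0 ->
    exists n : nat, (1 <= n)%N /\ (iter n f @` U) `&` V !=set0.

(* (X, Borel, mu, f) is a measure-preserving dynamical system; mu is taken as
   a measure on Borel sets of R, and the system's measure is its trace on X,
   i.e. A |-> mu (X `&` A) for Borel A. *)
Definition mpds (X : set R) (mu : {measure set R -> \bar R}) (f : R -> R) : Prop :=
  [/\ set_fun X X f,
      measurable_fun X f &
      forall A : set R, measurable A ->
        mu (X `&` f @^-1` A) = mu (X `&` A)].

Definition mpds_iso (X1 X2 : set R) (mu1 mu2 : {measure set R -> \bar R})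
    (f1 f2 : R -> R) (phi : R -> R) : Prop :=
  [/\ set_fun X1 X2 phi,
      measurable_fun X1 phi,
      (exists psi : R -> R,
         [/\ set_fun X2 X1 psi, measurable_fun X2 psi,
             {in X1, cancel phi psi} & {in X2, cancel psi phi}]),
      (forall A : set R, measurable A ->
         mu1 (X1 `&` phi @^-1` A) = mu2 (X2 `&` A)) &
      {in X1, forall x, phi (f1 x) = f2 (phi x)}].

End defs.

(* Main.v *)
Require Import Defs.
From HB Require Import structures.
From mathcomp Require Import all_boot all_order all_algebra all_fingroup.
From mathcomp Require Import all_classical all_reals all_analysis.
From mathcomp Require Import zify lra.
Set Implicit Arguments. Unset Strict Implicit.
Import Order.TTheory GRing.Theory Num.Theory.
Import numFieldNormedType.Exports.
Local Open Scope classical_set_scope.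
Local Open Scope ring_scope.

Lemma pattern_lt (R : realType) (T : R -> R) x L (pi : 'S_L) (i j : 'I_L) :
  defines_pattern T x pi -> (i < j)%N -> iter (pi i) T x < iter (pi j) T x.
Proof.
move=> H ij.
have := @sorted_ltn_nth _ _ lt_trans x _ H i j.
rewrite !inE size_map size_enum_ord !ltn_ord => /(_ isT isT ij).
by rewrite !(nth_map i) -?enumT ?size_enum_ord // !nth_ord_enum.
Qed.

Lemma pattern_ex (R : realType) (T : R -> R) x L :
  uniq [seq iter i T x | i <- iota 0 L] -> exists pi : 'S_L, defines_pattern T x pi.
Proof.
move=> U.
pose t := [tuple iter (val i) T x | i < L].
have hs : size (sort <=%R (val t)) == L by rewrite size_sort size_tuple.
have : perm_eq (Tuple hs) t by rewrite /= perm_sort.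
move/tuple_permP => [p Hp]; exists p.
rewrite /defines_pattern.
have -> : [seq iter (p i) T x | i <- enum 'I_L] = sort <=%R (val t).
  have Hp' : sort <=%R (val t) = [seq tnth t (p i) | i <- ord_tuple L] by exact: Hp.
  by rewrite Hp' val_ord_tuple; apply: eq_map => i /=; rewrite tnth_mktuple.
rewrite sort_lt_sorted /= -val_ord_tuple.
have -> : [seq (iter (val i) T x) | i <- enum 'I_L] = [seq iter i T x | i <- map val (enum 'I_L)].
  by rewrite -map_comp.
by rewrite val_enum_ord.
Qed.

Lemma period_lemma (R : realType) (T : R -> R) x m : exists L,
  uniq [seq iter i T x | i <- iota 0 L] /\ exists k, (k < L)%N /\ iter k T x = iter m T x.
Proof.
pose P n := (m < n)%N || (iter n T x \in [seq iter i T x | i <- iota 0 n]).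
have exP : exists n, P n by exists m.+1; rewrite /P ltnSn.
case: (ex_minnP exP) => L PL Lmin.
exists L; split.
  have : forall n, (n <= L)%N -> uniq [seq iter i T x | i <- iota 0 n].
    elim=> [//|n IH] nL.
    rewrite -addn1 iotaD map_cat cat_uniq IH ?(ltnW nL) //= andbT orbF.
    have : ~~ P n by apply/negP => /Lmin; rewrite leqNgt nL.
    by rewrite /P negb_or => /andP[_].
  by apply.
case/orP: PL => [mL|/mapP [i0]]; first by exists m.
rewrite mem_iota add0n => /andP[_ i0L] HL.
have key : forall n, exists k, (k < L)%N /\ iter k T x = iter n T x.
  elim/ltn_ind => n IH.
  case: (ltnP n L) => nL; first by exists n.
  have -> : n = ((n - L) + L)%N by rewrite subnK.
  rewrite iterD HL -iterD.
  apply: IH.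
  have L0 : (0 < L)%N by apply: leq_ltn_trans i0L.
  lia.
exact: key.
Qed.

Lemma orbit_order (R : realType) (T1 T2 g : R -> R) x y m :
  same_order_patterns T1 T2 x y -> (forall k, iter k T2 y = g (iter k T1 x)) ->
  x < iter m T1 x -> y < iter m T2 y.
Proof.
move=> Hs Hg xm.
case: (period_lemma T1 x m) => L [U [k [kL Hk]]].
have k0 : k != 0%N by apply/eqP => k0; move: xm; rewrite -Hk k0 /= ltxx.
have L2 : (2 <= L)%N by rewrite (leq_ltn_trans _ kL) // lt0n.
case: (pattern_ex U) => pi Hpi.
have H2 := (Hs L L2 pi).1 Hpi.
have L0 : (0 < L)%N by apply: leq_trans L2.
pose o0 := Ordinal L0; pose ok := Ordinal kL.
pose a := (pi^-1)%g o0; pose b := (pi^-1)%g ok.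
have pa : pi a = o0 by rewrite permKV.
have pb : pi b = ok by rewrite permKV.
case: (ltngtP a b) => ab.
- have := pattern_lt H2 ab; rewrite pa pb /= Hg Hk -Hg //.
- have := pattern_lt Hpi ab; rewrite pa pb /= Hk => /(lt_trans xm); by rewrite ltxx.
- have : o0 = ok by rewrite -pa -pb; congr (pi _); apply: val_inj.
  by move/(congr1 val) => /= /esym/eqP; rewrite (negbTE k0).
Qed.

Lemma cont_ball (R : realType) (X : set R) (f : R -> R) x e :
  {within X, continuous f} -> X x -> 0 < e ->
  exists2 d, 0 < d & forall y, X y -> `|x - y| < d -> `|f x - f y| < e.
Proof.
move=> Hc Xx e0.
have := (@subspace_continuousP _ X _ f).1 Hc x Xx.
move/cvgrPdist_lt => /(_ e e0).
rewrite near_withinE => /nbhs_ballP [d /= d0 Hd].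
exists d => // y Xy xy; by apply: Hd.
Qed.

Theorem proposition2 (R : realType) (X1 X2 : set R)
    (mu1 mu2 : {measure set R -> \bar R}) (f1 f2 phi : R -> R) :
  mpds X1 mu1 f1 -> mpds X2 mu2 f2 ->
  mpds_iso X1 X2 mu1 mu2 f1 f2 phi ->
  {within X1, continuous phi} ->
  top_transitive X1 f1 ->
  (forall x, X1 x -> same_order_patterns f1 f2 x (phi x)) ->
  forall x x', X1 x -> X1 x' -> x < x' -> phi x < phi x'.
Proof.
move=> [f1S _ _] _ [phiS _ [psi [_ _ canp _]] _ conj] Hc Htr Hpat x x' Xx Xx' xx'.
have iterX : forall n y, X1 y -> X1 (iter n f1 y).
  by elim=> [//|n IH] y Xy /=; apply: f1S; apply: IH.
have iterC : forall n y, X1 y -> phi (iter n f1 y) = iter n f2 (phi y).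
  elim=> [//|n IH] y Xy /=; rewrite conj ?IH //; exact/mem_set/iterX.
have key : forall y n, X1 y -> y < iter n f1 y -> phi y < phi (iter n f1 y).
  move=> y n Xy H; rewrite iterC //.
  apply: (orbit_order (g := phi) (Hpat y Xy) _ H) => k; by rewrite iterC.
have neq : phi x != phi x'.
  apply/eqP => E; have : psi (phi x) = psi (phi x') by rewrite E.
  rewrite !canp; [|exact: mem_set|exact: mem_set].
  by move=> E'; move: xx'; rewrite E' ltxx.
case: (ltgtP (phi x) (phi x')) => // H; last by move: neq; rewrite H eqxx.
have [e eE] : exists e, e = (phi x - phi x') / 2 by eexists.
have e0 : 0 < e by rewrite eE; lra.
have [d dE] : exists d, d = (x' - x) / 2 by eexists.
have d0 : 0 < d by rewrite dE; lra.
case: (cont_ball Hc Xx e0) => d1 d10 Hd1.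
case: (cont_ball Hc Xx' e0) => d2 d20 Hd2.
have r10 : 0 < Num.min d1 d by rewrite lt_min d10 d0.
have r20 : 0 < Num.min d2 d by rewrite lt_min d20 d0.
have := Htr (X1 `&` ball x (Num.min d1 d)) (X1 `&` ball x' (Num.min d2 d)).
case.
- by exists (ball x (Num.min d1 d)); split => //; exact: ball_open.
- by exists (ball x' (Num.min d2 d)); split => //; exact: ball_open.
- by exists x; split => //; exact: ballxx.
- by exists x'; split => //; exact: ballxx.
move=> n [_ [z [[y [Xy By] <-] [Xz Bz]]]].
move: By Bz; rewrite -ball_normE /ball_ /= !lt_min => /andP[By1 By2] /andP[Bz1 Bz2].
have lt1 : y < iter n f1 y.
  move: By2 Bz2; rewrite !ltr_norml => /andP[? ?] /andP[? ?]; lra.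
have := key y n Xy lt1.
have := Hd1 y Xy By1; have := Hd2 _ Xz Bz1.
rewrite !ltr_norml => /andP[? ?] /andP[? ?]; lra.
Qed.
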